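(* In the model described in the context (for any $n>2$, any $\mu\in(0,1)$, any finite set $Q$ of full-support conditional distributions, any collection $\mathcal{R}$ of admissible DAGs, any ideal policy $d^*\in D$ and any symmetric convex cost function $C$ with $C(0)=C'(0)=0$), an equilibrium $(\alpha,\sigma)$ exists.
   Context: Let $n>2$ and $X=X_1\times\cdots\times X_n$ with $X_i=\{0,1\}$. For $x\in X$, write $a=x_1$ (action) and $y=x_n$ (consequence). For $N\subseteq\{1,\dots,n\}$, $X_N=\times_{i\in N}X_i$. Let $Q$ be a finite set of conditional distributions of $(x_2,\dots,x_{n-1})$ given $(x_1,x_n)$, each with full support for every $(x_1,x_n)$. For $\alpha,\mu\in(0,1)$, $P_{\alpha,\mu}$ is the set of distributions $p$ on $X$ with $p(a=1)=\alpha$, $p(y=1\mid a)=\mu$ for both values of $a$, and $p(\cdot\mid x_1,x_n)\in Q$. A DAG is a pair $(N,R)$ with $N\subseteq\{1,\dots,n\}$ and $R\subseteq N\times N$ acyclic; $R(i)=\{j\in N: jRi\}$. $\mathcal{R}$ is a (finite) collection of DAGs $(N,R)$ with $\{1,n\}\subseteq N$ and no directed path from $n$ to $1$. A narrative is a pair $s=(p,R)\in P_{\alpha,\mu}\times\mathcal{R}$; it induces $p_R(x_N)=\prod_{i\in N}p(x_i\mid x_{R(i)})$, and $p_R(y\mid a)$ is the conditional derived from $p_R$. Let $D=[\varepsilon,1-\varepsilon]$ for a small $\varepsilon>0$ (policies $d$ = proposed frequency of $a=1$). Gross anticipatory utility: $V(s,d\mid\alpha)=d\,p_R(y=1\mid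 a=1)+(1-d)\,p_R(y=1\mid a=0)$. With ideal policy $d^*\in D$ and a symmetric convex cost function $C$ with $C(0)=C'(0)=0$, net anticipatory utility is $U(s,d\mid\alpha)=V(s,d\mid\alpha)-C(d-d^* )$. An equilibrium is a pair of $\alpha\in[0,1]$ and a probability distribution $\sigma$ over narrative-policy pairs $(s,d)\in P_{\alpha,\mu}\times\mathcal{R}\times D$ such that every element of the support of $\sigma$ maximizes $U(s,d\mid\alpha)$ over $P_{\alpha,\mu}\times\mathcal{R}\times D$, and $\alpha=\sum_{(s,d)}\sigma(s,d)\,d$. *)

(* Defs.v *)
From HB Require Import structures.
From mathcomp Require Import all_boot all_order all_algebra.
From mathcomp Require Import all_classical all_reals all_analysis.
Set Implicit Arguments. Unset Strict Implicit. Unset Printing Implicit Defensive.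
Import Order.TTheory GRing.Theory Num.Theory.
Local Open Scope ring_scope.

(* Coordinates are indexed by 'I_n; coordinate 1 of the paper is the index
   with value 0, coordinate n of the paper is the index with value n-1. *)
Definition X (n : nat) := {ffun 'I_n -> bool}.

Definition isA (n : nat) (i : 'I_n) : bool := val i == 0%N.
Definition isY (n : nat) (i : 'I_n) : bool := val i == n.-1.

Definition aval (n : nat) (x : X n) : bool := [exists i, isA i && x i].
Definition yval (n : nat) (x : X n) : bool := [exists i, isY i && x i].

Definition endpts (n : nat) : {set 'I_n} := [set i | isA i || isY i].

Definition marg {R : realType} (n : nat) (p : X n -> R) (S : {set 'I_n})
  (x : X n) : R :=
  \sum_(z : X n | [forall i in S, z i == x i]) p z.

Definition cond {R : realType} (n : nat) (p : X n -> R) (i : 'I_n)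
  (S : {set 'I_n}) (x : X n) : R :=
  marg p (i |: S) x / marg p S x.

Definition is_distr {R : realType} (n : nat) (p : X n -> R) : Prop :=
  (forall x, 0 <= p x) /\ \sum_(x : X n) p x = 1.

(* q x = probability of the middle coordinates (x_2..x_{n-1}) of x given
   the endpoint coordinates (x_1, x_n) of x; full support. *)
Definition is_full_cond_dist {R : realType} (n : nat) (q : {ffun X n -> R})
  : Prop :=
  (forall x, 0 < q x) /\
  (forall x, \sum_(z : X n | [forall i in endpts n, z i == x i]) q z = 1).

Definition probA {R : realType} (n : nat) (p : X n -> R) (b : bool) : R :=
  \sum_(x : X n | aval x == b) p x.

Definition condYA {R : realType} (n : nat) (p : X n -> R) (b : bool) : R :=
  (\sum_(x : X n | (aval x == b) && yval x) p x) / probA p b.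

Definition inP {R : realType} (n : nat) (alpha mu : R)
  (Q : seq {ffun X n -> R}) (p : X n -> R) : Prop :=
  is_distr p /\ probA p true = alpha /\ (forall b, condYA p b = mu) /\
  exists2 q, q \in Q & forall x, p x / marg p (endpts n) x = q x.

(* A DAG (N, R): node set N and edge set R (pairs (j,i) meaning j R i). *)
Definition DAG (n : nat) := ({set 'I_n} * {set ('I_n * 'I_n)})%type.

Definition edge (n : nat) (g : DAG n) : rel 'I_n := fun u v => (u, v) \in g.2.

Definition admissible (n : nat) (g : DAG n) : Prop :=
  (forall i j, (i, j) \in g.2 -> (i \in g.1) && (j \in g.1)) /\
  (forall i j, (i, j) \in g.2 -> ~~ connect (edge g) j i) /\
  (forall i, isA i || isY i -> i \in g.1) /\
  (forall i j, isY i -> isA j -> ~~ connect (edge g) i j).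

Definition parents (n : nat) (g : DAG n) (i : 'I_n) : {set 'I_n} :=
  [set j in g.1 | (j, i) \in g.2].

Definition pR {R : realType} (n : nat) (p : X n -> R) (g : DAG n) (x : X n)
  : R := \prod_(i in g.1) cond p i (parents g i) x.

(* canonical embedding of X_N into X: coordinates outside N set to 0 *)
Definition inXN (n : nat) (g : DAG n) (x : X n) : bool :=
  [forall i, (i \notin g.1) ==> ~~ x i].

Definition pRcondY {R : realType} (n : nat) (p : X n -> R) (g : DAG n)
  (b : bool) : R :=
  (\sum_(x : X n | [&& inXN g x, aval x == b & yval x]) pR p g x) /
  (\sum_(x : X n | inXN g x && (aval x == b)) pR p g x).

Definition Vutil {R : realType} (n : nat) (p : X n -> R) (g : DAG n) (d : R)
  : R := d * pRcondY p g true + (1 - d) * pRcondY p g false.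

Definition Uutil {R : realType} (n : nat) (C : R -> R) (dstar : R)
  (p : X n -> R) (g : DAG n) (d : R) : R :=
  Vutil p g d - C (d - dstar).

Definition inD {R : realType} (eps d : R) : Prop := eps <= d <= 1 - eps.

Definition optimal {R : realType} (n : nat) (mu : R) (Q : seq {ffun X n -> R})
  (Rs : seq (DAG n)) (eps dstar : R) (C : R -> R) (alpha : R)
  (p : X n -> R) (g : DAG n) (d : R) : Prop :=
  inP alpha mu Q p /\ g \in Rs /\ inD eps d /\
  forall p' g' d', inP alpha mu Q p' -> g' \in Rs -> inD eps d' ->
    Uutil C dstar p' g' d' <= Uutil C dstar p g d.

(* (alpha, sigma) is an equilibrium, where sigma is the probability
   distribution putting weight w k on the narrative-policy pair
   ((ps k, gs k), ds k), k < m. *)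
Definition is_equilibrium {R : realType} (n : nat) (mu : R)
  (Q : seq {ffun X n -> R}) (Rs : seq (DAG n)) (eps dstar : R) (C : R -> R)
  (alpha : R) (m : nat) (w : 'I_m -> R) (ps : 'I_m -> X n -> R)
  (gs : 'I_m -> DAG n) (ds : 'I_m -> R) : Prop :=
  0 <= alpha <= 1 /\
  (forall k, 0 <= w k) /\ \sum_(k < m) w k = 1 /\
  (forall k, 0 < w k -> optimal mu Q Rs eps dstar C alpha (ps k) (gs k) (ds k)) /\
  alpha = \sum_(k < m) w k * ds k.

Definition convex_fun {R : realType} (C : R -> R) : Prop :=
  forall x y t : R, 0 <= t <= 1 ->
    C (t * x + (1 - t) * y) <= t * C x + (1 - t) * C y.

Definition admissible_cost {R : realType} (C : R -> R) : Prop :=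
  (forall x, C (- x) = C x) /\ convex_fun C /\ C 0 = 0 /\
  derivable C 0 1 /\ derive1 C 0 = 0.

(* Main.v *)
Require Import Defs.
From HB Require Import structures.
From mathcomp Require Import all_boot all_order all_algebra.
From mathcomp Require Import all_classical all_reals all_analysis.
From mathcomp Require Import ring lra.
Import Order.TTheory GRing.Theory Num.Theory.
Local Open Scope ring_scope.

Module MP1.
Set Implicit Arguments. Unset Strict Implicit.
Section Comb.
Variable (R : realType) (n : nat).
Hypothesis hn : (2 < n)%N.

Lemma n0 : (0 < n)%N. Proof. by apply: leq_trans hn. Qed.
Lemma n1 : (n.-1 < n)%N. Proof. by rewrite prednK // n0. Qed.
Definition ia : 'I_n := Ordinal n0.
Definition iy : 'I_n := Ordinal n1.

Lemma ia_iy : ia != iy.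
Proof. apply/eqP => /(congr1 val) /=; move: hn; case: n => //= m hm h. by rewrite -h in hm. Qed.

Lemma isAE i : isA i = (i == ia).
Proof. by rewrite /isA -val_eqE. Qed.
Lemma isYE i : isY i = (i == iy).
Proof. by rewrite /isY -val_eqE. Qed.

Lemma avalE (x : X n) : aval x = x ia.
Proof.
apply/existsP/idP => [[i /andP[]]|h]; first by rewrite isAE => /eqP ->.
by exists ia; rewrite isAE eqxx.
Qed.
Lemma yvalE (x : X n) : yval x = x iy.
Proof.
apply/existsP/idP => [[i /andP[]]|h]; first by rewrite isYE => /eqP ->.
by exists iy; rewrite isYE eqxx.
Qed.

Lemma endptsE (z x : X n) : [forall i in endpts n, z i == x i] =
  (aval z == aval x) && (yval z == yval x).
Proof.
rewrite !avalE !yvalE; apply/forall_inP/andP => [h|[/eqP h1 /eqP h2] i].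
  by split; apply: h; rewrite inE ?isAE ?isYE eqxx ?orbT.
by rewrite inE isAE isYE => /orP[] /eqP ->; rewrite ?h1 ?h2.
Qed.

Definition mkx (b1 b2 : bool) : X n :=
  [ffun i => if i == ia then b1 else if i == iy then b2 else false].

Lemma aval_mkx b1 b2 : aval (mkx b1 b2) = b1.
Proof. by rewrite avalE ffunE eqxx. Qed.
Lemma yval_mkx b1 b2 : yval (mkx b1 b2) = b2.
Proof. by rewrite yvalE ffunE eq_sym (negbTE ia_iy) eqxx. Qed.

Lemma cellsum (F : X n -> R) : \sum_x F x =
  \sum_(b1 : bool) \sum_(b2 : bool) \sum_(x | (aval x == b1) && (yval x == b2)) F x.
Proof.
rewrite big_bool /= !big_bool /=.
rewrite (bigID (fun x => aval x)) /=.
rewrite (bigID (fun x => yval x) (fun x => aval x)) /=.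
rewrite (bigID (fun x => yval x) (fun x => ~~ aval x)) /=.
by congr (_ + _ + (_ + _)); apply: eq_bigl => x; case: (aval x); case: (yval x).
Qed.

Lemma q_cell (q : {ffun X n -> R}) : is_full_cond_dist q -> forall b1 b2,
  \sum_(z | (aval z == b1) && (yval z == b2)) q z = 1.
Proof.
move=> [_ h] b1 b2; rewrite -(h (mkx b1 b2)); apply: eq_bigl => z.
by rewrite endptsE aval_mkx yval_mkx.
Qed.

End Comb.

End MP1.
Import MP1.

Module MP2.
Set Implicit Arguments. Unset Strict Implicit.
Section P2.
Variable (R : realType) (n : nat).
Hypothesis hn : (2 < n)%N.
Variable (mu : R) (Q : seq {ffun X n -> R}).
Hypothesis hmu : 0 < mu < 1.
Hypothesis hQ : forall q, q \in Q -> is_full_cond_dist q.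

Definition piA (al : R) (b : bool) : R := if b then al else 1 - al.
Definition piY (b : bool) : R := if b then mu else 1 - mu.
Definition pa (al : R) (q : X n -> R) : X n -> R :=
  fun x => piA al (aval x) * piY (yval x) * q x.

Definition cell (p : X n -> R) b1 b2 :=
  \sum_(x | (aval x == b1) && (yval x == b2)) p x.

Lemma cell_pa al q b1 b2 : cell (pa al q) b1 b2 = piA al b1 * piY b2 * cell q b1 b2.
Proof. rewrite /cell mulr_sumr; apply: eq_bigr => x /andP[/eqP h1 /eqP h2]; by rewrite /pa h1 h2. Qed.

Lemma marg_endpts (p : X n -> R) x : marg p (endpts n) x = cell p (aval x) (yval x).
Proof. by apply: eq_bigl => z; rewrite endptsE. Qed.

Lemma asum (p : X n -> R) b : probA p b = cell p b true + cell p b false.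
Proof.
rewrite /probA (bigID (fun x => yval x)) /=; congr (_ + _); apply: eq_bigl => x.
  by case: (yval x); rewrite ?andbT ?andbF.
by case: (yval x); rewrite ?andbT ?andbF.
Qed.

Lemma tsum (p : X n -> R) : \sum_x p x = probA p true + probA p false.
Proof. by rewrite cellsum big_bool /= !big_bool /= !asum. Qed.

Lemma condYA_cell (p : X n -> R) b : condYA p b = cell p b true / probA p b.
Proof. by rewrite /condYA /cell; congr (_ / _); apply: eq_bigl => x; rewrite eqb_id. Qed.

Lemma piA_gt0 al b : 0 < al < 1 -> 0 < piA al b.
Proof. by case: b => /= /andP[h1 h2] //; rewrite subr_gt0. Qed.
Lemma piY_gt0 b : 0 < piY b.
Proof. by case/andP: hmu; case: b => /= h1 h2 //; rewrite subr_gt0. Qed.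

Lemma pa_gt0 al q x : 0 < al < 1 -> is_full_cond_dist q -> 0 < pa al q x.
Proof.
move=> hal [hq _]; rewrite /pa !mulr_gt0 //; [exact: piA_gt0|exact: piY_gt0].
Qed.

Lemma pa_inP al q : 0 < al < 1 -> q \in Q -> inP al mu Q (pa al q).
Proof.
move=> hal qQ; have fq := hQ qQ.
have c1 := q_cell hn fq.
have cp : forall b1 b2, cell (pa al q) b1 b2 = piA al b1 * piY b2.
  by move=> b1 b2; rewrite cell_pa /cell c1 mulr1.
have pA : forall b, probA (pa al q) b = piA al b.
  by move=> b; rewrite asum !cp /= -mulrDr; lra.
split; [split|split].
- by move=> x; apply/ltW/pa_gt0.
- by rewrite tsum !pA /=; lra.
- by rewrite pA.
split.
- move=> b; rewrite condYA_cell pA cp /= mulrAC divff ?mul1r //.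
  by apply/lt0r_neq0/piA_gt0.
exists q => // x; rewrite marg_endpts cp /pa mulrAC divff ?mul1r //.
by apply/lt0r_neq0/mulr_gt0; [apply: piA_gt0|apply: piY_gt0].
Qed.

Lemma inP_pa al p : 0 < al < 1 -> inP al mu Q p -> exists2 q, q \in Q & p = pa al q.
Proof.
move=> hal [[p0 ps] [pA [pY [q qQ hq]]]].
have pF : probA p false = 1 - al by move: ps; rewrite tsum pA; lra.
have pAb : forall b, probA p b = piA al b by case.
have ct : forall b, cell p b true = mu * piA al b.
  move=> b; have := pY b; rewrite condYA_cell pAb => <-.
  by rewrite divfK //; apply/lt0r_neq0/piA_gt0.
have cp : forall b1 b2, cell p b1 b2 = piA al b1 * piY b2.
  move=> b1 [|] /=; first by rewrite ct mulrC.
  by have := asum p b1; rewrite ct pAb => h; lra.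
exists q => //; apply/funext => x; have := hq x.
rewrite marg_endpts cp /pa => <-; rewrite mulrC divfK //.
by apply/lt0r_neq0/mulr_gt0; [apply: piA_gt0|apply: piY_gt0].
Qed.

End P2.

End MP2.
Import MP2.

Module MP3.
Set Implicit Arguments. Unset Strict Implicit.
Import numFieldNormedType.Exports.
Local Open Scope classical_set_scope.
Local Open Scope ring_scope.
Section CT.
Variable (R : realType).
Definition CT (a : R) (f : R -> R) := f @ a --> f a.

Lemma CT_cst a c : CT a (fun _ => c).
Proof. exact: cvg_cst. Qed.
Lemma CT_id a : CT a id.
Proof. exact: cvg_id. Qed.
Lemma CT_add a f g : CT a f -> CT a g -> CT a (fun x => f x + g x).
Proof. move=> hf hg; exact: (cvgD hf hg). Qed.
Lemma CT_opp a f : CT a f -> CT a (fun x => - f x).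
Proof. move=> hf; exact: (cvgN hf). Qed.
Lemma CT_mul a f g : CT a f -> CT a g -> CT a (fun x => f x * g x).
Proof. move=> hf hg; exact: (cvgM hf hg). Qed.
Lemma CT_inv a f : f a != 0 -> CT a f -> CT a (fun x => (f x)^-1).
Proof. move=> h hf; exact: (cvgV h hf). Qed.
Lemma CT_div a f g : g a != 0 -> CT a f -> CT a g -> CT a (fun x => f x / g x).
Proof. by move=> h hf hg; apply: CT_mul => //; apply: CT_inv. Qed.

Lemma CT_sum (I : finType) (P : pred I) a (F : I -> R -> R) :
  (forall i, P i -> CT a (F i)) -> CT a (fun x => \sum_(i | P i) F i x).
Proof.
move=> h; have <- : \sum_(i | P i) F i = (fun x => \sum_(i | P i) F i x).
  by rewrite fct_sumE.
apply: (big_ind (fun f => CT a f)) => //; first exact: CT_cst.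
by move=> f g hf hg; apply: CT_add.
Qed.

Lemma CT_prod (I : finType) (P : pred I) a (F : I -> R -> R) :
  (forall i, P i -> CT a (F i)) -> CT a (fun x => \prod_(i | P i) F i x).
Proof.
move=> h; have <- : \prod_(i | P i) F i = (fun x => \prod_(i | P i) F i x).
  by rewrite fct_prodE.
apply: (big_ind (fun f => CT a f)) => //; first exact: CT_cst.
by move=> f g hf hg; apply: CT_mul.
Qed.

Lemma sum_gt0 (I : finType) (P : pred I) (F : I -> R) x0 :
  (forall x, P x -> 0 < F x) -> P x0 -> 0 < \sum_(x | P x) F x.
Proof.
move=> h p0; rewrite (bigD1 x0) //=.
have h1 := h x0 p0.
have h2 : 0 <= \sum_(i | P i && (i != x0)) F i.
  by apply: sumr_ge0 => i /andP[pi _]; apply/ltW/h.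
lra.
Qed.

Lemma prod_gt0 (I : finType) (P : pred I) (F : I -> R) :
  (forall x, P x -> 0 < F x) -> 0 < \prod_(x | P x) F x.
Proof. by move=> h; apply: prodr_gt0. Qed.

End CT.

Section P3.
Variable (R : realType) (n : nat).
Hypothesis hn : (2 < n)%N.
Variable (mu : R).
Hypothesis hmu : 0 < mu < 1.
Variable (q : X n -> R).
Hypothesis hq : forall x, 0 < q x.
Variable (a : R).
Hypothesis ha : 0 < a < 1.

Let P b := pa mu b q.

Lemma CT_pa z : CT a (fun b => P b z).
Proof.
rewrite /P /pa; apply: CT_mul; last exact: CT_cst.
apply: CT_mul; last exact: CT_cst.
case: (aval z) => /=; first exact: CT_id.
by apply: CT_add; [apply: CT_cst|apply: CT_opp; apply: CT_id].
Qed.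

Lemma P_gt0 z : 0 < P a z.
Proof.
rewrite /P /pa !mulr_gt0 //; [exact: piA_gt0|exact: piY_gt0].
Qed.

Lemma CT_marg S x : CT a (fun b => marg (P b) S x).
Proof. by apply: CT_sum => z _; apply: CT_pa. Qed.

Lemma marg_gt0 S x : 0 < marg (P a) S x.
Proof. by apply: (sum_gt0 (x0 := x)) => [z _|]; [apply: P_gt0|apply/forall_inP]. Qed.

Lemma CT_cond i S x : CT a (fun b => cond (P b) i S x).
Proof.
apply: CT_div; [apply/lt0r_neq0/marg_gt0|apply: CT_marg|apply: CT_marg].
Qed.

Lemma cond_gt0 i S x : 0 < cond (P a) i S x.
Proof. by apply: divr_gt0; apply: marg_gt0. Qed.

Lemma CT_pR g x : CT a (fun b => pR (P b) g x).
Proof. by apply: CT_prod => i _; apply: CT_cond. Qed.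

Lemma pR_gt0 g x : 0 < pR (P a) g x.
Proof. by apply: prod_gt0 => i _; apply: cond_gt0. Qed.

Lemma CT_pRcondY g b : admissible g -> CT a (fun c => pRcondY (P c) g b).
Proof.
move=> [_ [_ [hA _]]].
apply: CT_div; [|by apply: CT_sum => x _; apply: CT_pR|by apply: CT_sum => x _; apply: CT_pR].
apply/lt0r_neq0; apply: (sum_gt0 (x0 := [ffun i => b && (i == ia hn)])).
  by move=> x _; apply: pR_gt0.
apply/andP; split.
  apply/forallP => i; apply/implyP => hi; rewrite ffunE; apply/negP => /andP[_ /eqP e].
  by move: hi; rewrite e hA // isAE eqxx.
by rewrite (avalE hn) ffunE eqxx andbT.
Qed.

End P3.

End MP3.
Import MP3.

Module MP4.
Set Implicit Arguments. Unset Strict Implicit.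
Section Cost.
Variable (R : realType) (C : R -> R).
Hypothesis hC : admissible_cost C.

Lemma C_ge0 x : 0 <= C x.
Proof.
case: hC => [hs [hc [h0 _]]].
have := hc x (- x) (1/2); rewrite hs.
have -> : 1 / 2 * x + (1 - 1 / 2) * - x = 0 by field.
rewrite h0 => h.
have h12 : (0:R) <= 1/2 by lra.
have h12' : (1/2:R) <= 1 by lra.
by have := h (introT andP (conj h12 h12')); lra.
Qed.

Lemma C_lip1 x y : -1 <= x -> x <= y -> y <= 1 ->
  C y - C x <= C 2 * (y - x) /\ C x - C y <= C 2 * (y - x).
Proof.
case: hC => [hs [hc [h0 _]]] h1 h2 h3.
have c0 := C_ge0; have cx := c0 x; have cy := c0 y; have c2 := c0 2.
split.
  pose t := (2 - y) / (2 - x).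
  have ht : t * (2 - x) = 2 - y by rewrite /t divfK //; apply/lt0r_neq0; lra.
  have t0 : 0 <= t by rewrite /t divr_ge0 //; lra.
  have t1 : t <= 1 by rewrite /t ler_pdivrMr; lra.
  have e : t * x + (1 - t) * 2 = y by lra.
  have := hc x 2 t; rewrite e => /(_ (introT andP (conj t0 t1))) hh.
  have k1 : 0 <= (1 - t) * C x by apply: mulr_ge0; lra.
  have k2 : 0 <= (1 - t) * C 2 * (1 - x) by apply: mulr_ge0; [apply: mulr_ge0|]; lra.
  nra.
pose t := (y - x) / (y + 2).
have ht : t * (y + 2) = y - x by rewrite /t divfK //; apply/lt0r_neq0; lra.
have t0 : 0 <= t by rewrite /t divr_ge0 //; lra.
have t1 : t <= 1 by rewrite /t ler_pdivrMr; lra.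
have e : (1 - t) * y + (1 - (1 - t)) * (- 2) = x by lra.
have := hc y (-2) (1 - t); rewrite e hs.
have hh0 : 0 <= 1 - t <= 1 by apply/andP; split; lra.
move/(_ hh0) => hh.
have k1 : 0 <= t * C y by apply: mulr_ge0; lra.
have k2 : 0 <= t * C 2 * (1 + y) by apply: mulr_ge0; [apply: mulr_ge0|]; lra.
nra.
Qed.

Lemma C_lip x y : -1 <= x <= 1 -> -1 <= y <= 1 -> `|C x - C y| <= C 2 * `|x - y|.
Proof.
move=> /andP[hx1 hx2] /andP[hy1 hy2].
have c2 := C_ge0 2.
have n1 : x - y <= `|x - y| := ler_norm _.
have n2 : - (x - y) <= `|x - y| by rewrite -[in X in _ <= X]normrN; apply: ler_norm.
rewrite ler_norml; apply/andP.
case: (lerP x y) => hxy.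
  have [h1 h2] := C_lip1 hx1 hxy hy2.
  split; nra.
have [h1 h2] := C_lip1 hy1 (ltW hxy) hx2.
split; nra.
Qed.

End Cost.

End MP4.
Import MP4.

Module MP5.
Set Implicit Arguments. Unset Strict Implicit.
Import numFieldNormedType.Exports.
Local Open Scope classical_set_scope.
Local Open Scope ring_scope.
Section Near.
Variable R : realType.
Lemma near_dist (z d : R) : 0 < d -> \forall x \near z, `|z - x| <= d.
Proof. by move=> hd; move: (@CT_id _ z) => /cvgrPdist_le /(_ d hd). Qed.

Lemma near_seq (T : eqType) (s : seq T) (z : R) (P : T -> R -> Prop) :
  (forall i, i \in s -> \forall x \near z, P i x) ->
  \forall x \near z, forall i, i \in s -> P i x.
Proof.
elim: s => [|j s IH] h.
  by apply: filterE => x i; rewrite in_nil.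
have h1 := h j (mem_head _ _).
have h2 : \forall x \near z, forall i, i \in s -> P i x.
  by apply: IH => i hi; apply: h; rewrite in_cons hi orbT.
apply: (filterS2 _ _ h1 h2) => x p1 p2 i; rewrite in_cons => /orP[/eqP->//|]; exact: p2.
Qed.
End Near.

Section Aux.
Variable R : realType.
Lemma normflip (u v t : R) : `|u - v| <= t -> `|v - u| <= t.
Proof. by rewrite !ler_norml => /andP[h1 h2]; apply/andP; split; lra. Qed.

Lemma seq_bound (T : eqType) (t : seq T) (f : T -> R) :
  exists K, 0 <= K /\ forall x, x \in t -> f x <= K.
Proof.
elim: t => [|j t [K [K0 hK]]]; first by exists 0; split => // x; rewrite in_nil.
exists (K + `|f j|); split; first by have := normr_ge0 (f j); lra.
move=> x; rewrite in_cons => /orP[/eqP->|hx].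
  by have := ler_norm (f j); lra.
by have := hK x hx; have := normr_ge0 (f j); lra.
Qed.

Lemma cover_lo (lo1 lo2 h d : R) : lo2 <= h -> lo1 <= d <= h ->
  exists2 d', lo2 <= d' <= h & `|d - d'| <= `|lo1 - lo2|.
Proof.
move=> h2 /andP[d1 d2].
have n1 : lo1 - lo2 <= `|lo1 - lo2| := ler_norm _.
have n2 : - (lo1 - lo2) <= `|lo1 - lo2| by rewrite -[in X in _ <= X]normrN; apply: ler_norm.
case: (ltrP d lo2) => hd.
  exists lo2; first by rewrite lexx h2.
  by rewrite ler_norml; apply/andP; split; lra.
exists d; first by rewrite hd d2.
by rewrite subrr normr0 normr_ge0.
Qed.

Lemma cover_hi (l h1 h2 d : R) : l <= h2 -> l <= d <= h1 ->
  exists2 d', l <= d' <= h2 & `|d - d'| <= `|h1 - h2|.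
Proof.
move=> h2' /andP[d1 d2].
have n1 : h1 - h2 <= `|h1 - h2| := ler_norm _.
have n2 : - (h1 - h2) <= `|h1 - h2| by rewrite -[in X in _ <= X]normrN; apply: ler_norm.
case: (ltrP h2 d) => hd.
  exists h2; first by rewrite lexx h2'.
  by rewrite ler_norml; apply/andP; split; lra.
exists d; first by rewrite hd d1.
by rewrite subrr normr0 normr_ge0.
Qed.
End Aux.

Section Fix.
Variable (R : realType) (I : eqType) (s : seq I).
Hypothesis hs : s != [::].
Variable (a b : I -> R -> R) (C : R -> R).
Hypothesis hC : admissible_cost C.
Variable (eps dstar : R).
Hypothesis heps : 0 < eps < 1 / 2.
Hypothesis hd : eps <= dstar <= 1 - eps.
Hypothesis hab : forall i al, i \in s -> eps <= al <= 1 - eps -> CT al (a i) /\ CT al (b i).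

Definition W i be d := d * a i be + (1 - d) * b i be - C (d - dstar).

Lemma CT_C (z : R) : -1 < z < 1 -> CT z C.
Proof.
move=> /andP[z1 z2]; apply/cvgrPdist_le => e e0.
have c2 := C_ge0 hC 2.
have r1 : 0 < 1 - z by lra.
have r2 : 0 < z + 1 by lra.
have t0 : 0 < e / (C 2 + 1) by apply: divr_gt0; lra.
have ht : e / (C 2 + 1) * (C 2 + 1) = e by rewrite divfK //; apply/lt0r_neq0; lra.
apply: (filterS3 _ _ (near_dist z r1) (near_dist z r2) (near_dist z t0)) => x h1 h2 h3.
move: h1 h2; rewrite !ler_norml => /andP[k1 k2] /andP[k3 k4].
have hx : -1 <= x <= 1 by apply/andP; split; lra.
have hz : -1 <= z <= 1 by apply/andP; split; lra.
have hl := C_lip hC hz hx.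
have k : C 2 * `|z - x| <= C 2 * (e / (C 2 + 1)) by apply: ler_wpM2l.
move: hl; rewrite ler_norml => /andP[l1 l2].
apply/andP; split; nra.
Qed.

Lemma CT_W i (be d : R) : eps <= d <= 1 - eps -> CT d (W i be).
Proof.
move=> /andP[d1 d2]; rewrite /W; apply: CT_add; last apply: CT_opp.
  apply: CT_add; apply: CT_mul; try exact: CT_cst; try exact: CT_id.
  by apply: CT_add; [apply: CT_cst|apply: CT_opp; apply: CT_id].
have hc : CT (d - dstar) C by apply: CT_C; case/andP: hd; case/andP: heps => *; apply/andP; split; lra.
have hl : CT d (fun x => x - dstar) by apply: CT_add; [apply: CT_id|apply: CT_cst].
exact: (continuous_comp hl hc).
Qed.

Lemma att1 i (be lo hi : R) : eps <= lo -> lo <= hi -> hi <= 1 - eps ->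
  exists d, lo <= d <= hi /\ forall d', lo <= d' <= hi -> W i be d' <= W i be d.
Proof.
move=> h1 h2 h3.
have ct : {within `[lo, hi], continuous (W i be)}.
  apply: continuous_in_subspaceT => x /set_mem /=; rewrite in_itv /= => /andP[x1 x2].
  by apply: CT_W; apply/andP; split; lra.
have [c hc hmax] := EVT_max h2 ct.
exists c; split; first by move: hc; rewrite in_itv.
by move=> d' hd'; apply: hmax; rewrite in_itv.
Qed.

Lemma att_seq (t : seq I) (be lo hi : R) : eps <= lo -> lo <= hi -> hi <= 1 - eps ->
  t != [::] -> exists i d, [/\ i \in t, lo <= d <= hi &
    forall j d', j \in t -> lo <= d' <= hi -> W j be d' <= W i be d].
Proof.
move=> h1 h2 h3; elim: t => [//|j t IH] _.
have [dj [hdj mj]] := att1 j be h1 h2 h3.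
case: t IH => [|k t] IH.
  exists j, dj; split => //; first exact: mem_head.
  by move=> j' d'; rewrite mem_seq1 => /eqP-> ; apply: mj.
have [i [d [hit hdd mi]]] := IH isT.
case: (lerP (W j be dj) (W i be d)) => hc.
  exists i, d; split => //; first by rewrite in_cons hit orbT.
  move=> j' d'; rewrite in_cons => /orP[/eqP->|hj'] hd'; last exact: mi.
  by apply: le_trans hc; apply: mj.
exists j, dj; split => //; first exact: mem_head.
move=> j' d'; rewrite in_cons => /orP[/eqP->|hj'] hd'; first exact: mj.
by apply: le_trans (ltW hc); apply: mi.
Qed.

Definition Sset lo hi be :=
  [set u | exists i d, [/\ i \in s, lo <= d <= hi & u = W i be d]].
Definition Mx lo hi be := sup (Sset lo hi be).

Lemma Mx_att (be lo hi : R) : eps <= lo -> lo <= hi -> hi <= 1 - eps ->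
  exists i d, [/\ i \in s, lo <= d <= hi, Mx lo hi be = W i be d &
    forall j d', j \in s -> lo <= d' <= hi -> W j be d' <= Mx lo hi be].
Proof.
move=> h1 h2 h3; have [i [d [his hdd mx]]] := att_seq be h1 h2 h3 hs.
have ub : ubound (Sset lo hi be) (W i be d).
  by move=> u [j [d' [hj hd' ->]]]; apply: mx.
have ne : Sset lo hi be !=set0 by exists (W i be d), i, d.
have e : Mx lo hi be = W i be d.
  apply/le_anti/andP; split; first exact: ge_sup.
  by apply: sup_upper_bound; [split => //; exists (W i be d)|exists i, d].
exists i, d; split => // j d' hj hd'; rewrite e; exact: mx.
Qed.

Lemma W_diff_be i (be al d dl : R) : 0 <= d <= 1 ->
  `|a i be - a i al| <= dl -> `|b i be - b i al| <= dl ->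
  `|W i be d - W i al d| <= dl.
Proof.
move=> /andP[d0 d1]; rewrite !ler_norml => /andP[k1 k2] /andP[k3 k4].
have e : W i be d - W i al d = d * (a i be - a i al) + (1 - d) * (b i be - b i al).
  by rewrite /W; ring.
have d1' : 0 <= 1 - d by lra.
have p1 := ler_wpM2l d0 k2; have p2 := ler_wpM2l d0 k1.
have p3 := ler_wpM2l d1' k4; have p4 := ler_wpM2l d1' k3.
rewrite e; move: p1 p2 p3 p4; rewrite !mulrN; generalize (a i be - a i al) (b i be - b i al) => x y q1 q2 q3 q4.
apply/andP; split; lra.
Qed.

Lemma W_diff_d i (al d d' K : R) : 0 <= d <= 1 -> 0 <= d' <= 1 ->
  `|a i al| + `|b i al| <= K ->
  `|W i al d - W i al d'| <= (K + C 2) * `|d - d'|.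
Proof.
move=> /andP[d0 d1] /andP[d0' d1'] hK.
have hc : `|C (d - dstar) - C (d' - dstar)| <= C 2 * `|d - d'|.
  have -> : d - d' = (d - dstar) - (d' - dstar) by ring.
  by case/andP: hd => *; case/andP: heps => *; apply: C_lip => //; apply/andP; split; lra.
have e : W i al d - W i al d' = (d - d') * (a i al - b i al) - (C (d - dstar) - C (d' - dstar)).
  by rewrite /W; ring.
rewrite e; apply: le_trans (ler_normB _ _) _.
rewrite normrM mulrDl; apply: lerD => //.
rewrite mulrC; apply: ler_wpM2r => //.
by apply: le_trans (ler_normB _ _) hK.
Qed.

Lemma Mx_est (be al l1 h1 l2 h2 r dl K : R) :
  eps <= l1 -> l1 <= h1 -> h1 <= 1 - eps -> eps <= l2 -> l2 <= h2 -> h2 <= 1 - eps ->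
  (forall d, l1 <= d <= h1 -> exists2 d', l2 <= d' <= h2 & `|d - d'| <= r) ->
  (forall d, l2 <= d <= h2 -> exists2 d', l1 <= d' <= h1 & `|d - d'| <= r) ->
  (forall i, i \in s -> `|a i be - a i al| <= dl /\ `|b i be - b i al| <= dl) ->
  (forall i, i \in s -> `|a i al| + `|b i al| <= K) ->
  `|Mx l1 h1 be - Mx l2 h2 al| <= dl + (K + C 2) * r.
Proof.
move=> a1 a2 a3 b1 b2 b3 c12 c21 hdl hK.
have [e1 e2] : 0 < eps /\ eps < 1 / 2 by case/andP: heps.
have [i [d [his hdd E1 m1]]] := Mx_att be a1 a2 a3.
have [j [d2 [hjs hdd2 E2 m2]]] := Mx_att al b1 b2 b3.
have K0 : 0 <= K + C 2.
  have := hK i his; have := normr_ge0 (a i al); have := normr_ge0 (b i al).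
  have := C_ge0 hC 2; lra.
have [d' hd' hr] := c12 d hdd.
have [d2' hd2' hr2] := c21 d2 hdd2.
have u01 : forall x, eps <= x <= 1 - eps -> 0 <= x <= 1.
  by move=> x /andP[x1 x2]; apply/andP; split; lra.
have D1 : l1 <= d <= h1 -> eps <= d <= 1 - eps.
  by case/andP => *; apply/andP; split; lra.
have D2 : forall x, l2 <= x <= h2 -> eps <= x <= 1 - eps.
  by move=> x /andP[*]; apply/andP; split; lra.
have D1' : forall x, l1 <= x <= h1 -> eps <= x <= 1 - eps.
  by move=> x /andP[*]; apply/andP; split; lra.
have f1 := W_diff_be (u01 _ (D1' _ hdd)) (proj1 (hdl i his)) (proj2 (hdl i his)).
have f2 := W_diff_d (u01 _ (D1' _ hdd)) (u01 _ (D2 _ hd')) (hK i his).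
have f3 := m2 i d' his hd'.
have g1 := W_diff_be (u01 _ (D1' _ hd2')) (proj1 (hdl j hjs)) (proj2 (hdl j hjs)).
have g2 := W_diff_d (u01 _ (D2 _ hdd2)) (u01 _ (D1' _ hd2')) (hK j hjs).
have g3 := m1 j d2' hjs hd2'.
have r1 := ler_wpM2l K0 hr; have r2 := ler_wpM2l K0 hr2.
move: f1 f2 g1 g2; rewrite !ler_norml => /andP[f1 f1'] /andP[f2 f2'] /andP[g1 g1'] /andP[g2 g2'].
rewrite E1 E2 in f3 g3 *; apply/andP; split; lra.
Qed.

Definition clamp (x : R) := if x < eps then eps else if 1 - eps < x then 1 - eps else x.

Lemma clamp_in x : eps <= clamp x <= 1 - eps.
Proof.
have [e1 e2] : 0 < eps /\ eps < 1 / 2 by case/andP: heps.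
rewrite /clamp; case: ifP => h1; first by apply/andP; split; lra.
case: ifP => h2; first by apply/andP; split; lra.
by move/negbT: h1; move/negbT: h2; rewrite -!leNgt => h2 h1; apply/andP; split.
Qed.

Lemma clamp_id x : eps <= x <= 1 - eps -> clamp x = x.
Proof.
move=> /andP[x1 x2]; rewrite /clamp ltNge x1 /= ltNge x2 //.
Qed.

Lemma clamp_lip x y : `|clamp x - clamp y| <= `|x - y|.
Proof.
have [e1 e2] : 0 < eps /\ eps < 1 / 2 by case/andP: heps.
have n1 : x - y <= `|x - y| := ler_norm _.
have n2 : - (x - y) <= `|x - y| by rewrite -[in X in _ <= X]normrN; apply: ler_norm.
rewrite ler_norml /clamp.
case: (ltrP x eps) => hx; case: (ltrP y eps) => hy /=;
case: (ltrP (1 - eps) x) => hx'; case: (ltrP (1 - eps) y) => hy' /=;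
apply/andP; split; lra.
Qed.

Definition Up x := Mx (clamp x) (1 - eps) x.
Definition Dn x := Mx eps (clamp x) x.
Definition Fd x := Up x - Dn x.

Lemma CT_Fd al : eps <= al <= 1 - eps -> CT al Fd.
Proof.
move=> hal.
have [e1 e2] : 0 < eps /\ eps < 1 / 2 by case/andP: heps.
have [K [K0 hK]] := seq_bound s (fun i => `|a i al| + `|b i al|).
have c2 := C_ge0 hC 2.
apply/cvgrPdist_le => e e0.
have dl0 : 0 < e / 4 by apply: divr_gt0 => //; lra.
have r0 : 0 < e / (4 * (K + C 2 + 1)) by apply: divr_gt0 => //; lra.
have hr : e / (4 * (K + C 2 + 1)) * (4 * (K + C 2 + 1)) = e.
  by rewrite divfK //; apply/lt0r_neq0; lra.
have N1 : \forall x \near al, forall i, i \in s ->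
    `|a i al - a i x| <= e / 4 /\ `|b i al - b i x| <= e / 4.
  apply: near_seq => i hi; have [ca cb] := hab hi hal.
  move: ca cb => /cvgrPdist_le /(_ _ dl0) ca /cvgrPdist_le /(_ _ dl0) cb.
  by apply: (filterS2 _ _ ca cb) => x.
apply: (filterS2 _ _ N1 (near_dist al r0)) => x hx hxr.
have hdl : forall i, i \in s -> `|a i x - a i al| <= e / 4 /\ `|b i x - b i al| <= e / 4.
  by move=> i hi; have [h1 h2] := hx i hi; split; apply: normflip.
have hcl : `|clamp x - clamp al| <= e / (4 * (K + C 2 + 1)).
  by apply: le_trans (clamp_lip x al) _; apply: normflip.
have [ci1 ci2] : eps <= clamp x /\ clamp x <= 1 - eps by case/andP: (clamp_in x).
have ca : clamp al = al by apply: clamp_id.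
have [al1 al2] : eps <= al /\ al <= 1 - eps by case/andP: hal.
set r := e / (4 * (K + C 2 + 1)) in r0 hr hxr hcl.
have hcl' : `|clamp x - al| <= r by rewrite -ca.
have hcl'' : `|al - clamp x| <= r by apply: normflip.
have cv12 : forall d, clamp x <= d <= 1 - eps -> exists2 d', al <= d' <= 1 - eps & `|d - d'| <= r.
  by move=> d hd0; have [d' h1 h2] := cover_lo al2 hd0; exists d' => //; apply: le_trans h2 _.
have cv21 : forall d, al <= d <= 1 - eps -> exists2 d', clamp x <= d' <= 1 - eps & `|d - d'| <= r.
  by move=> d hd0; have [d' h1 h2] := cover_lo ci2 hd0; exists d' => //; apply: le_trans h2 _.
have cw12 : forall d, eps <= d <= clamp x -> exists2 d', eps <= d' <= al & `|d - d'| <= r.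
  by move=> d hd0; have [d' h1 h2] := cover_hi al1 hd0; exists d' => //; apply: le_trans h2 _.
have cw21 : forall d, eps <= d <= al -> exists2 d', eps <= d' <= clamp x & `|d - d'| <= r.
  by move=> d hd0; have [d' h1 h2] := cover_hi ci1 hd0; exists d' => //; apply: le_trans h2 _.
have hU := Mx_est ci1 ci2 (lexx _) al1 al2 (lexx _) cv12 cv21 hdl hK.
have hD := Mx_est (lexx _) ci1 ci2 (lexx _) al1 al2 cw12 cw21 hdl hK.
rewrite /Fd /Up /Dn ca.
move: hU hD; rewrite !ler_norml => /andP[u1 u2] /andP[v1 v2].
have k1 : (K + C 2) * r <= e / 4.
  have : (K + C 2) * r <= (K + C 2 + 1) * r by rewrite ler_wpM2r //; [lra|lra].
  suff : (K + C 2 + 1) * r = e / 4 by lra.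
  by rewrite /r; field; lra.
apply/andP; split; lra.
Qed.


Lemma fixpt : exists al i1 i2 d1 d2,
  (eps <= al <= 1 - eps) /\ i1 \in s /\ i2 \in s /\ (eps <= d2 <= al) /\
  (al <= d1 <= 1 - eps) /\ W i1 al d1 = W i2 al d2 /\
  (forall j d, j \in s -> eps <= d <= 1 - eps -> W j al d <= W i1 al d1).
Proof.
have [e1 e2] : 0 < eps /\ eps < 1 / 2 by case/andP: heps.
have le1 : eps <= 1 - eps by lra.
have F0 : 0 <= Fd eps.
  rewrite /Fd /Up /Dn clamp_id; last by rewrite lexx le1.
  have [j [d2 [hj hd2 E2 _]]] := Mx_att eps (lexx eps) (lexx eps) le1.
  have [_ [_ [_ _ _ m]]] := Mx_att eps (lexx eps) le1 (lexx _).
  have hd2' : eps <= d2 <= 1 - eps by case/andP: hd2 => *; apply/andP; split; lra.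
  by have := m j d2 hj hd2'; rewrite E2; lra.
have F1 : Fd (1 - eps) <= 0.
  rewrite /Fd /Up /Dn clamp_id; last by rewrite lexx le1.
  have [j [d2 [hj hd2 E2 _]]] := Mx_att (1 - eps) le1 (lexx _) (lexx _).
  have [_ [_ [_ _ _ m]]] := Mx_att (1 - eps) (lexx eps) le1 (lexx _).
  have hd2' : eps <= d2 <= 1 - eps by case/andP: hd2 => *; apply/andP; split; lra.
  by have := m j d2 hj hd2'; rewrite E2; lra.
have ct : {within `[eps, 1 - eps], continuous Fd}.
  apply: continuous_in_subspaceT => x /set_mem /=; rewrite in_itv /= => hx.
  exact: CT_Fd.
have [|c hc Fc] := @IVT _ Fd eps (1 - eps) 0 le1 ct.
  by rewrite ge_min le_max F1 F0 orbT.
move: hc; rewrite in_itv /= => hc.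
have [c1 c2] : eps <= c /\ c <= 1 - eps by case/andP: hc.
move: Fc; rewrite /Fd /Up /Dn clamp_id // => Fc.
have [i1 [d1 [hi1 hd1 E1 m1]]] := Mx_att c c1 c2 (lexx _).
have [i2 [d2 [hi2 hd2 E2 m2]]] := Mx_att c (lexx _) c1 c2.
exists c, i1, i2, d1, d2; do 5 (split => //).
  split; first by rewrite -E1 -E2; apply/eqP; rewrite -subr_eq0 Fc.
move=> j d hj /andP[h1 h2]; rewrite -E1.
case: (lerP c d) => hcd.
  by apply: m1 => //; apply/andP; split.
have := m2 j d hj (introT andP (conj h1 (ltW hcd))); lra.
Qed.

End Fix.

End MP5.
Import MP5.

Theorem proposition1 (R : realType) (n : nat) (mu : R)
  (Q : seq {ffun X n -> R}) (Rs : seq (DAG n)) (eps dstar : R) (C : R -> R) :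
  (2 < n)%N ->
  0 < mu < 1 ->
  Q != [::] -> (forall q, q \in Q -> is_full_cond_dist q) ->
  Rs != [::] -> (forall g, g \in Rs -> admissible g) ->
  0 < eps < 1 / 2 ->
  inD eps dstar ->
  admissible_cost C ->
  exists (alpha : R) (m : nat) (w : 'I_m -> R) (ps : 'I_m -> X n -> R)
         (gs : 'I_m -> DAG n) (ds : 'I_m -> R),
    is_equilibrium mu Q Rs eps dstar C alpha w ps gs ds.
Proof.
move=> hn hmu hQne hQ hRne hR heps hd hC.
pose s := [seq (q, g) | q <- Q, g <- Rs].
have mems : forall q g, q \in Q -> g \in Rs -> (q, g) \in s.
  by move=> q g hq hg; apply: allpairs_f.
have memsP : forall k, k \in s -> k.1 \in Q /\ k.2 \in Rs.
  by move=> k /allpairsP [[q g] [/= hq hg ->]].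
have hs : s != [::].
  have [q0 hq0] : exists q0, q0 \in Q by case: (Q) hQne => // q0 Q' _; exists q0; exact: mem_head.
  have [g0 hg0] : exists g0, g0 \in Rs by case: (Rs) hRne => // g0 Rs' _; exists g0; exact: mem_head.
  by apply/eqP => e; have := mems q0 g0 hq0 hg0; rewrite e.
pose a := fun (k : {ffun X n -> R} * DAG n) be => pRcondY (pa mu be k.1) k.2 true.
pose b := fun (k : {ffun X n -> R} * DAG n) be => pRcondY (pa mu be k.1) k.2 false.
have [e1 e2] : 0 < eps /\ eps < 1 / 2 by case/andP: heps.
have hab : forall k al, k \in s -> eps <= al <= 1 - eps -> CT al (a k) /\ CT al (b k).
  move=> k al hk /andP[al1 al2]; have [hq hg] := memsP k hk.
  have hal : 0 < al < 1 by apply/andP; split; lra.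
  have hq0 : forall x, 0 < k.1 x by case: (hQ _ hq).
  by split; apply: (CT_pRcondY hn hmu hq0 hal); apply: hR.
have [al [[q1 g1] [[q2 g2] [d1 [d2 [hal [hi1 [hi2 [hd2 [hd1 [E hmax]]]]]]]]]]] :=
  fixpt hs hC heps hd hab.
have [al1 al2] : eps <= al /\ al <= 1 - eps by case/andP: hal.
have hal01 : 0 < al < 1 by apply/andP; split; lra.
have [hq1 hg1] := memsP _ hi1; have [hq2 hg2] := memsP _ hi2; simpl in *.
have opt : forall q g d, q \in Q -> g \in Rs -> eps <= d <= 1 - eps ->
    W a b C dstar (q, g) al d = W a b C dstar (q1, g1) al d1 ->
    optimal mu Q Rs eps dstar C al (pa mu al q) g d.
  move=> q g d hq hg hdd hW.
  split; first exact: pa_inP.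
  split => //; split => // p' g' d' hp' hg' hd'.
  have [q' hq' ->] := inP_pa hn hmu hal01 hp'.
  change (W a b C dstar (q', g') al d' <= W a b C dstar (q, g) al d).
  by rewrite hW; apply: hmax => //; apply: mems.
have [hd21 hd22] : eps <= d2 /\ d2 <= al by case/andP: hd2.
have [hd11 hd12] : al <= d1 /\ d1 <= 1 - eps by case/andP: hd1.
pose t := if d1 == d2 then 1 else (al - d2) / (d1 - d2).
have [t0 t1 te] : [/\ 0 <= t, t <= 1 & al = t * d1 + (1 - t) * d2].
  rewrite /t; case: eqP => [e|ne].
    by split => //; lra.
  have dp : 0 < d1 - d2 by rewrite subr_gt0 lt_neqAle; apply/andP; split; [apply/eqP => h; apply: ne; rewrite h|lra].
  split; first by apply: divr_ge0; lra.
    by rewrite ler_pdivrMr //; lra.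
  by field; apply/lt0r_neq0.
exists al, 2, (fun k : 'I_2 => if val k == 0%N then t else 1 - t),
  (fun k => pa mu al (if val k == 0%N then q1 else q2)),
  (fun k => if val k == 0%N then g1 else g2),
  (fun k => if val k == 0%N then d1 else d2).
split; first by apply/andP; split; lra.
split; first by move=> k; case: ifP => _; lra.
split; first by rewrite !big_ord_recl big_ord0 /=; lra.
split; last by rewrite !big_ord_recl big_ord0 /=; lra.
case=> [[|[|k]]] //= _ _.
  by apply: opt => //; apply/andP; split; lra.
apply: opt => //; try by apply/andP; split; lra.
Qed.
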